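(* Let $N\in\mathbb{N}$, $a\ge0$, $b>0$, $\alpha:=a+b-1$, $\beta:=b-1$, and let $z_1\le\dots\le z_N$ be the ordered zeros of the Jacobi polynomial $P_N^{(\alpha,\beta)}$. Let $\tilde S=(\tilde s_{i,j})_{i,j=1,\dots,N}$ be the matrix with $$\tilde s_{j,j}=4\sum_{l\ne j}\frac{1-z_j^2}{(z_j-z_l)^2}+2(a+b)\frac{1+z_j}{1-z_j}+2b\frac{1-z_j}{1+z_j},\qquad \tilde s_{i,j}=\frac{-4\sqrt{(1-z_j^2)(1-z_i^2)}}{(z_i-z_j)^2}\ (i\ne j),$$ and let $\lambda_k:=2k(2N+\alpha+\beta+1-k)$. Then for each $k=2,\dots,N$ there exists a polynomial $p_k$ of degree at most $k-2$ such that the vector $v_k:=\bigl(z_1^{k-1}\sqrt{1-z_1^2},\dots,z_N^{k-1}\sqrt{1-z_N^2}\bigr)^T$ satisfies $$\tilde S v_k=\Bigl((\lambda_k z_1^{k-1}+p_k(z_1))\sqrt{1-z_1^2},\dots,(\lambda_k z_N^{k-1}+p_k(z_N))\sqrt{1-z_N^2}\Bigr)^T.$$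
   Context: $P_N^{(\alpha,\beta)}$ denotes the classical Jacobi polynomial of degree $N$, orthogonal on $]-1,1[$ with respect to the weight $(1-x)^\alpha(1+x)^\beta$; its zeros are simple and lie in $]-1,1[$. *)

(* Defs.v *)
From mathcomp Require Import all_boot all_order all_algebra.
From mathcomp Require Import reals.
Set Implicit Arguments. Unset Strict Implicit. Unset Printing Implicit Defensive.
Import Order.TTheory GRing.Theory Num.Theory.
Local Open Scope ring_scope.

Definition gbinom (R : fieldType) (x : R) (k : nat) : R :=
  (\prod_(i < k) (x - i%:R)) / (k`!)%:R.

(* Classical Jacobi polynomial P_N^(al,be), explicit (Szego 4.3.2) form:
   P_N(x) = sum_{s=0}^N binom(N+al, N-s) binom(N+be, s) ((x-1)/2)^s ((x+1)/2)^(N-s). *)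
Definition jacobi (R : fieldType) (N : nat) (al be : R) : {poly R} :=
  \sum_(s < N.+1)
     (gbinom (N%:R + al) (N - s) * gbinom (N%:R + be) s) *:
       ((2^-1 *: ('X - 1)) ^+ s * (2^-1 *: ('X + 1)) ^+ (N - s)).

Definition Stilde (R : realType) (N : nat) (a b : R) (z : 'I_N -> R) : 'M[R]_N :=
  \matrix_(i < N, j < N)
    if i == j then
      4 * (\sum_(l < N | l != j) (1 - z j ^+ 2) / (z j - z l) ^+ 2)
      + 2 * (a + b) * ((1 + z j) / (1 - z j))
      + 2 * b * ((1 - z j) / (1 + z j))
    else
      - 4 * Num.sqrt ((1 - z j ^+ 2) * (1 - z i ^+ 2)) / (z i - z j) ^+ 2.

(* Main.v *)
Require Import Defs.
From mathcomp Require Import all_boot all_order all_algebra.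
From mathcomp Require Import reals.
From mathcomp Require Import ring lra zify.
Import Order.TTheory GRing.Theory Num.Theory.
Local Open Scope ring_scope.

Definition Up (R : realType) : {poly R} := 2^-1 *: ('X - 1).
Definition Vp (R : realType) : {poly R} := 2^-1 *: ('X + 1).
Definition Mst (R : realType) (s t : nat) : {poly R} := Up R ^+ s * Vp R ^+ t.

Lemma dUp (R : realType) : (Up R)^`() = (2^-1)%:P.
Proof. by rewrite /Up derivZ derivB derivX derivC subr0 -mul_polyC mulr1. Qed.
Lemma dVp (R : realType) : (Vp R)^`() = (2^-1)%:P.
Proof. by rewrite /Vp derivZ derivD derivX derivC addr0 -mul_polyC mulr1. Qed.

Lemma UdU (R : realType) s : Up R * ((Up R) ^+ s)^`() = (s%:R / 2) *: (Up R)^+s.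
Proof.
rewrite deriv_exp dUp; case: s => [|s]; first by rewrite !mulr0n mulr0 mul0r scale0r.
rewrite -mul_polyC polyCM polyC_natr -mulr_natr exprS /=; ring.
Qed.
Lemma VdV (R : realType) s : Vp R * ((Vp R) ^+ s)^`() = (s%:R / 2) *: (Vp R)^+s.
Proof.
rewrite deriv_exp dVp; case: s => [|s]; first by rewrite !mulr0n mulr0 mul0r scale0r.
rewrite -mul_polyC polyCM polyC_natr -mulr_natr exprS /=; ring.
Qed.

Lemma DM (R : realType) s t : Up R * Vp R * (Mst R s t)^`() =
  (s%:R/2) *: Mst R s t.+1 + (t%:R/2) *: Mst R s.+1 t.
Proof.
rewrite /Mst derivM mulrDr.
rewrite (_ : Up R * Vp R * (_ * Vp R ^+ t) = Vp R * Vp R ^+ t * (Up R * (Up R ^+ s)^`())); last by ring.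
rewrite (_ : Up R * Vp R * (Up R ^+ s * _) = Up R * Up R ^+ s * (Vp R * (Vp R ^+ t)^`())); last by ring.
rewrite UdU VdV -!mul_polyC !exprS; ring.
Qed.

Lemma LM (R : realType) (x al be lam : R) s t :
  let m := Mst R s t in
  let u := (x - 1) / 2 in let v := (x + 1) / 2 in
  (u * v) ^+ 2 * ((1 - x ^+ 2) * (m^`()^`()).[x] + ((be - al) - (al + be + 2) * x) * (m^`()).[x] + lam * m.[x])
  = - (s%:R * (s%:R + al)) * (u ^+ s.+1 * v ^+ t.+3)
    - t%:R * (t%:R + be) * (u ^+ s.+3 * v ^+ t.+1)
    + (lam - 2 * s%:R * t%:R - (be + 1) * s%:R - (al + 1) * t%:R) * (u ^+ s.+2 * v ^+ t.+2).
Proof.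
move=> m u v.
set W := Up R * Vp R.
have E0 : (W * m^`()) = (s%:R/2) *: Mst R s t.+1 + (t%:R/2) *: Mst R s.+1 t by rewrite DM.
have e1 : W * (W * m^`())^`() = W * W^`() * m^`() + W^+2 * m^`()^`() by rewrite derivM; ring.
rewrite E0 in e1.
have e2 : W * ((s%:R/2) *: Mst R s t.+1 + (t%:R/2) *: Mst R s.+1 t)^`() =
   (s%:R/2) *: ((s%:R/2) *: Mst R s t.+2 + (t.+1%:R/2) *: Mst R s.+1 t.+1)
 + (t%:R/2) *: ((s.+1%:R/2) *: Mst R s.+1 t.+1 + (t%:R/2) *: Mst R s.+2 t).
  by rewrite derivD !derivZ mulrDr -!scalerAr !DM.
have dW : W^`() = 2^-1 *: (Up R + Vp R).
  by rewrite /W derivM dUp dVp -!mul_polyC; ring.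
have hU : (Up R).[x] = u by rewrite /Up hornerZ hornerD hornerN hornerX hornerC mulrC.
have hV : (Vp R).[x] = v by rewrite /Vp hornerZ hornerD hornerX hornerC mulrC.
have hW : W.[x] = u * v by rewrite hornerM hU hV.
have E2 : (u*v)^+2 * (m^`()^`()).[x] = (W * ((s%:R/2) *: Mst R s t.+1 + (t%:R/2) *: Mst R s.+1 t)^`()).[x] - (W * W^`() * m^`()).[x].
  by rewrite e1 hornerD addrAC subrr add0r hornerM horner_exp hW.
have E1 : (u*v)^+2 * (m^`()).[x] = (u * v) * (W * m^`()).[x].
  by rewrite hornerM hW; ring.
rewrite !mulrDr (mulrCA _ (1 - x^+2)) E2 (mulrCA _ (_ - _ * x)) E1 e2 E0.
have E3 : (W * W^`() * m^`()).[x] = (W^`()).[x] * (W * m^`()).[x] by rewrite !hornerM; ring.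
rewrite E3 E0 dW.
rewrite /m /Mst !(hornerD, hornerM, horner_exp, hornerZ) hornerX hornerN !hornerC.
rewrite (_ : 2^-1 * (x + -1) = u); last by rewrite /u mulrC.
rewrite (_ : 2^-1 * (x + 1) = v); last by rewrite /v mulrC.
rewrite !exprS.
move: (u ^+ s) (v ^+ t) => A B.
rewrite /u /v.
by field.
Qed.

Lemma LM' (R : realType) (x al be lam : R) s t :
  ((x - 1) / 2 * ((x + 1) / 2)) ^+ 2 * ((1 - x ^+ 2) * ((Mst R s t)^`()^`()).[x] + ((be - al) - (al + be + 2) * x) * ((Mst R s t)^`()).[x] + lam * (Mst R s t).[x])
  = - (s%:R * (s%:R + al)) * (((x - 1) / 2) ^+ s.+1 * ((x + 1) / 2) ^+ t.+3)
    - t%:R * (t%:R + be) * (((x - 1) / 2) ^+ s.+3 * ((x + 1) / 2) ^+ t.+1)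
    + (lam - 2 * s%:R * t%:R - (be + 1) * s%:R - (al + 1) * t%:R) * (((x - 1) / 2) ^+ s.+2 * ((x + 1) / 2) ^+ t.+2).
Proof. exact: LM. Qed.

Lemma gbinomS (R : realType) (x : R) m :
  gbinom x m.+1 * m.+1%:R = gbinom x m * (x - m%:R).
Proof.
rewrite /gbinom big_ord_recr /= factS natrM.
have h1 : (m`!)%:R != 0 :> R by rewrite pnatr_eq0 -lt0n fact_gt0.
have h2 : (m.+1)%:R != 0 :> R by rewrite pnatr_eq0.
by field; rewrite h1 nat1r h2.
Qed.

Lemma jac_ratio (R : realType) (N : nat) (al be : R) s : (s < N)%N ->
  gbinom (N%:R + al) (N - s.+1) * gbinom (N%:R + be) s.+1 * (s.+1%:R * (s.+1%:R + al))
  = gbinom (N%:R + al) (N - s) * gbinom (N%:R + be) s * ((N-s)%:R * ((N-s)%:R + be)).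
Proof.
move=> hs.
have e1 := gbinomS _ (N%:R + be) s.
have e2 := gbinomS _ (N%:R + al) (N - s.+1).
have hN : (N - s.+1).+1 = (N - s)%N by rewrite subnSK.
rewrite hN in e2.
have h3 : (N - s.+1)%:R = N%:R - s%:R - 1 :> R.
  by rewrite natrB // -nat1r; ring.
have h4 : (N - s)%:R = N%:R - s%:R :> R by rewrite natrB // ltnW.
rewrite h3 h4 in e2; rewrite h4 in e2 *.
rewrite -nat1r in e1 e2 *.
have -> : gbinom (N%:R + al) (N - s.+1) * gbinom (N%:R + be) s.+1 * ((1 + s%:R) * (1 + s%:R + al))
   = (gbinom (N%:R + al) (N - s.+1) * (N%:R + al - (N%:R - s%:R - 1))) * (gbinom (N%:R + be) s.+1 * (1 + s%:R)) by ring.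
rewrite -e2 e1; ring.
Qed.

Lemma jac_ode (R : realType) N (al be x : R) :
  ((x - 1) / 2 * ((x + 1) / 2)) ^+ 2 *
  ((1 - x ^+ 2) * ((jacobi N al be)^`()^`()).[x]
   + ((be - al) - (al + be + 2) * x) * ((jacobi N al be)^`()).[x]
   + (N%:R * (N%:R + al + be + 1)) * (jacobi N al be).[x]) = 0.
Proof.
set u := (x - 1) / 2; set v := (x + 1) / 2.
set lam := N%:R * (N%:R + al + be + 1).
set c := fun s : nat => gbinom (N%:R + al) (N - s) * gbinom (N%:R + be) s.
have -> : jacobi N al be = \sum_(s < N.+1) c s *: Mst R s (N - s) by [].
rewrite !linear_sum !horner_sum.
transitivity (\sum_(s < N.+1) c s * ((u * v) ^+ 2 * ((1 - x ^+ 2) * ((Mst R s (N - s))^`()^`()).[x] + ((be - al) - (al + be + 2) * x) * ((Mst R s (N - s))^`()).[x] + lam * (Mst R s (N - s)).[x]))).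
  rewrite !mulr_sumr -!big_split mulr_sumr; apply: eq_bigr => s _.
  rewrite !linearZ /= !hornerZ; ring.
under eq_bigr => s _ do rewrite LM'.
rewrite -/u -/v.
have hF : \sum_(s < N.+1) c s * (s%:R * (s%:R + al)) * (u ^+ s.+1 * v ^+ (N - s).+3)
  = \sum_(s < N.+1) c s * ((N - s)%:R * ((N - s)%:R + be)) * (u ^+ s.+2 * v ^+ (N - s).+2).
  rewrite big_ord_recl /= mul0r mulr0 mul0r add0r big_ord_recr /= subnn mul0r mulr0 mul0r addr0.
  apply: eq_bigr => i _.
  have hi := ltn_ord i.
  have -> : bump 0 i = i.+1 by [].
  rewrite /c jac_ratio // subnSK //; ring.
have hG : \sum_(s < N.+1) c s * ((N - s)%:R * ((N - s)%:R + be)) * (u ^+ s.+3 * v ^+ (N - s).+1)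
  = \sum_(s < N.+1) c s * (s%:R * (s%:R + al)) * (u ^+ s.+2 * v ^+ (N - s).+2).
  rewrite big_ord_recr /= subnn mul0r mulr0 mul0r addr0 big_ord_recl /= mul0r mulr0 mul0r add0r.
  apply: eq_bigr => i _.
  have hi := ltn_ord i.
  have -> : bump 0 i = i.+1 by [].
  rewrite /c jac_ratio // subnSK //; ring.
have -> : \sum_(s < N.+1) c s *
     (- (s%:R * (s%:R + al)) * (u ^+ s.+1 * v ^+ (N - s).+3) -
      (N - s)%:R * ((N - s)%:R + be) * (u ^+ s.+3 * v ^+ (N - s).+1) +
      (lam - 2 * s%:R * (N - s)%:R - (be + 1) * s%:R - (al + 1) * (N - s)%:R) *
      (u ^+ s.+2 * v ^+ (N - s).+2))
  = \sum_(s < N.+1) c s * (lam - 2 * s%:R * (N - s)%:R - (be + 1) * s%:R - (al + 1) * (N - s)%:R) * (u ^+ s.+2 * v ^+ (N - s).+2)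
   - \sum_(s < N.+1) c s * (s%:R * (s%:R + al)) * (u ^+ s.+1 * v ^+ (N - s).+3)
   - \sum_(s < N.+1) c s * ((N - s)%:R * ((N - s)%:R + be)) * (u ^+ s.+3 * v ^+ (N - s).+1).
  by rewrite -!sumrB; apply: eq_bigr => s _; ring.
rewrite hF hG -!sumrB; apply: big1 => s _.
have hs : (s <= N)%N by rewrite -ltnS ltn_ord.
rewrite /lam natrB //; ring.
Qed.

Lemma gbinom_gt0 (R : realType) (x : R) m :
  (forall i, (i < m)%N -> 0 < x - i%:R) -> 0 < gbinom x m.
Proof.
move=> H; rewrite /gbinom divr_gt0 //; last by rewrite ltr0n fact_gt0.
by apply: prodr_gt0 => i _; apply: H.
Qed.

Lemma jac_eval (R : realType) N (al be x : R) :
  (jacobi N al be).[x] = \sum_(s < N.+1) (gbinom (N%:R + al) (N - s) * gbinom (N%:R + be) s)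
     * (((x - 1) / 2) ^+ s * ((x + 1) / 2) ^+ (N - s)).
Proof.
rewrite /jacobi horner_sum; apply: eq_bigr => s _.
by rewrite hornerZ hornerM !horner_exp !hornerZ hornerD hornerN hornerX hornerC hornerD hornerX hornerC !(mulrC 2^-1).
Qed.

Lemma jac_c_gt0 (R : realType) N (a b : R) s : 0 <= a -> 0 < b -> (s <= N)%N ->
  0 < gbinom (N%:R + (a + b - 1)) (N - s) * gbinom (N%:R + (b - 1)) s.
Proof.
move=> ha hb hs; apply: mulr_gt0; apply: gbinom_gt0 => i hi.
- have : (i.+1 <= N)%N by apply: leq_trans hi (leq_subr _ _).
  rewrite -(ler_nat R) -nat1r => h; lra.
- have : (i.+1 <= N)%N by apply: leq_trans hi hs.
  rewrite -(ler_nat R) -nat1r => h; lra.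
Qed.

Lemma jac_pos (R : realType) N (a b x : R) : 0 <= a -> 0 < b -> 1 <= x ->
  0 < (jacobi N (a + b - 1) (b - 1)).[x].
Proof.
move=> ha hb hx; rewrite jac_eval big_ord_recl /=.
have h1 : 0 < gbinom (N%:R + (a + b - 1)) (N - 0) * gbinom (N%:R + (b - 1)) 0 *
      (((x - 1) / 2) ^+ 0 * ((x + 1) / 2) ^+ (N - 0)).
  apply: mulr_gt0; first exact: jac_c_gt0.
  by rewrite expr0 mul1r exprn_gt0 // divr_gt0 //; lra.
set S := \sum_(i < N) _.
have h2 : 0 <= S.
  apply: sumr_ge0 => i _; apply: mulr_ge0; first by apply: ltW; apply: jac_c_gt0.
  by apply: mulr_ge0; apply: exprn_ge0; apply: divr_ge0 => //; lra.
lra.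
Qed.

Lemma jac_neg (R : realType) N (a b x : R) : 0 <= a -> 0 < b -> x <= -1 ->
  0 < (-1) ^+ N * (jacobi N (a + b - 1) (b - 1)).[x].
Proof.
move=> ha hb hx; rewrite jac_eval mulr_sumr big_ord_recr /=.
have E : forall s : nat, (s <= N)%N -> (-1) ^+ N * (((x - 1) / 2) ^+ s * ((x + 1) / 2) ^+ (N - s))
   = ((1 - x) / 2) ^+ s * ((- 1 - x) / 2) ^+ (N - s).
  move=> s hs; rewrite -{1}(subnKC hs) exprD.
  rewrite (_ : (1 - x) / 2 = (-1) * ((x - 1) / 2)); last by ring.
  rewrite (_ : (-1 - x) / 2 = (-1) * ((x + 1) / 2)); last by ring.
  rewrite !exprMn; ring.
have h1 : 0 < (-1) ^+ N * (gbinom (N%:R + (a + b - 1)) (N - N) * gbinom (N%:R + (b - 1)) N *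
      (((x - 1) / 2) ^+ N * ((x + 1) / 2) ^+ (N - N))).
  rewrite mulrCA E //=; apply: mulr_gt0; first exact: jac_c_gt0.
  by rewrite subnn expr0 mulr1 exprn_gt0 // divr_gt0 //; lra.
set S := \sum_(i < N) _.
have h2 : 0 <= S.
  apply: sumr_ge0 => i _; rewrite mulrCA E /=; last by apply: ltnW.
  apply: mulr_ge0; first by apply: ltW; apply: (jac_c_gt0 _ _ _ _ _ ha hb); apply: ltnW.
  by apply: mulr_ge0; apply: exprn_ge0; apply: divr_ge0 => //; lra.
lra.
Qed.

Lemma jac_root_in (R : realType) N (a b z : R) : 0 <= a -> 0 < b ->
  root (jacobi N (a + b - 1) (b - 1)) z -> -1 < z < 1.
Proof.
move=> ha hb /eqP hz; apply/andP; split; rewrite ltNge; apply/negP => h.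
- by have := jac_neg _ N _ _ _ ha hb h; rewrite hz mulr0 ltxx.
- by have := jac_pos _ N _ _ _ ha hb h; rewrite hz ltxx.
Qed.

Lemma logder (R : realType) (I : Type) (r : seq I) (P : pred I) (f : I -> R) x :
  (forall i, P i -> x != f i) ->
  ((\prod_(i <- r | P i) ('X - (f i)%:P))^`()).[x]
  = (\prod_(i <- r | P i) ('X - (f i)%:P)).[x] * \sum_(i <- r | P i) (x - f i)^-1.
Proof.
move=> H; elim: r => [|j r IH].
  by rewrite !big_nil -polyC1 derivC horner0 mulr0.
rewrite !big_cons; case: ifP => // Pj.
rewrite derivM derivXsubC mul1r !hornerD !hornerM IH !hornerXsubC.
have hx : x - f j != 0 by rewrite subr_eq0 H.
set A := (\prod_(i <- r | P i) _).[x]; set B := \sum_(i <- r | P i) _.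
by field.
Qed.

Lemma size_jac (R : realType) N (al be : R) : (size (jacobi N al be) <= N.+1)%N.
Proof.
rewrite /jacobi; apply: (leq_trans (size_sum _ _ _)); apply/bigmax_leqP => s _.
apply: (leq_trans (size_scale_leq _ _)); apply: (leq_trans (size_mul_leq _ _)).
have hU : (size (2^-1 *: ('X - 1) : {poly R}) <= 2)%N.
  by apply: (leq_trans (size_scale_leq _ _)); rewrite -polyC1 size_XsubC.
have hV : (size (2^-1 *: ('X + 1) : {poly R}) <= 2)%N.
  by apply: (leq_trans (size_scale_leq _ _)); rewrite -polyC1 size_XaddC.
have h1 : (size ((2^-1 *: ('X - 1) : {poly R}) ^+ s) <= s.+1)%N.
  apply: (leq_trans (size_exp_leq _ _)); rewrite ltnS.
  apply: (leq_trans (leq_mul (_ : _ <= 1)%N (leqnn s))); [lia | by rewrite mul1n].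
have h2 : (size ((2^-1 *: ('X + 1) : {poly R}) ^+ (N - s)) <= (N - s).+1)%N.
  apply: (leq_trans (size_exp_leq _ _)); rewrite ltnS.
  apply: (leq_trans (leq_mul (_ : _ <= 1)%N (leqnn _))); [lia | by rewrite mul1n].
have hs : (s <= N)%N by rewrite -ltnS ltn_ord.
apply: (leq_trans (_ : _ <= (s.+1 + (N - s).+1).-1)%N); [by rewrite -!subn1 leq_sub2r // leq_add | lia].
Qed.

Lemma stieltjes (R : realType) (N : nat) (a b : R) (z : 'I_N -> R) :
  0 <= a -> 0 < b ->
  {homo z : i j / (i < j)%N >-> i < j} ->
  (forall i, root (jacobi N (a + b - 1) (b - 1)) (z i)) ->
  forall i, 2 * (1 - z i ^+ 2) * (\sum_(l < N | l != i) (z i - z l)^-1) = (a + 2 * b) * z i + a.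
Proof.
move=> ha hb hz hroot i.
set P := jacobi N (a + b - 1) (b - 1).
have zinj : injective z.
  move=> j l hjl; apply/eqP; case: (ltngtP j l) => [h1|h1|/val_inj -> //];
    by have := hz _ _ h1; rewrite hjl ltxx.
have P0 : P != 0.
  apply/eqP => h; have := jac_pos _ N _ _ 1 ha hb (lexx 1).
  by rewrite -/P h horner0 ltxx.
have [q Pq] : exists q, P = q * \prod_(l < N) ('X - (z l)%:P).
  have H1 : all (root P) (map z (index_enum 'I_N)).
    by apply/allP => y /mapP [k0 _ ->]; exact: hroot.
  have H2 : uniq_roots (map z (index_enum 'I_N)).
    by rewrite uniq_rootsE (map_inj_uniq zinj) index_enum_uniq.
  have [q ->] := uniq_roots_prod_XsubC H1 H2.
  by exists q; rewrite big_map.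
have szI : size (index_enum 'I_N) = N.
  by have := card_ord N; rewrite cardT enumT /index_enum; unlock.
have szprod : size (\prod_(l < N) ('X - (z l)%:P)) = N.+1 by rewrite size_prod_XsubC szI.
have prod0 : \prod_(l < N) ('X - (z l)%:P) != 0 by rewrite -size_poly_eq0 szprod.
have q0 : q != 0 by apply: contraNneq P0 => q0; rewrite Pq q0 mul0r.
have qc : q = (q`_0)%:P.
  apply: size1_polyC; have := size_jac _ N (a + b - 1) (b - 1).
  rewrite -/P Pq size_mul // szprod addnS /= => h; by rewrite -(leq_add2r N) add1n.
set c := q`_0.
have c0 : c != 0 by rewrite -polyC_eq0 -qc.
set Q := \prod_(l < N | l != i) ('X - (z l)%:P).
have PQ : P = c%:P * (('X - (z i)%:P) * Q) by rewrite Pq qc (bigD1 i).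
have d1 : P^`() = c%:P * (Q + ('X - (z i)%:P) * Q^`()).
  by rewrite PQ deriv_mulC derivM derivXsubC mul1r.
have d2 : P^`()^`() = c%:P * (Q^`() *+ 2 + ('X - (z i)%:P) * Q^`()^`()).
  by rewrite d1 deriv_mulC derivD derivM derivXsubC mul1r mulr2n addrA.
set x := z i.
have hx := jac_root_in _ _ _ _ _ ha hb (hroot i).
rewrite -/x in hx.
have ode := jac_ode _ N (a + b - 1) (b - 1) x.
rewrite -/P d2 d1 (eqP (hroot i)) in ode.
have Qd := logder _ _ (index_enum 'I_N) (fun l => l != i) z x.
rewrite -/Q in Qd.
have hne : forall l, l != i -> x != z l.
  by move=> l hl; apply/eqP => /zinj hl'; rewrite hl' eqxx in hl.
have Qx0 : Q.[x] != 0.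
  rewrite /Q horner_prod; apply/prodf_neq0 => l hl.
  by rewrite hornerXsubC subr_eq0 hne.
set S := \sum_(l < N | l != i) (x - z l)^-1.
rewrite -/S in ode.
move: ode; rewrite !(hornerD, hornerM, hornerMn, hornerC, hornerXsubC, hornerX, hornerN) subrr !mul0r !addr0 mulr0 addr0 (Qd hne) => ode.
have uv0 : (x - 1) / 2 * ((x + 1) / 2) != 0.
  case/andP: hx => h1 h2.
  rewrite mulf_eq0 negb_or !mulf_eq0 !negb_or !invr_eq0 (_ : (2 : R) != 0) ?pnatr_eq0 //.
  rewrite !andbT; apply/andP; split; apply/eqP => h; lra.
have H : (((x - 1) / 2 * ((x + 1) / 2)) ^+ 2 * (c * Q.[x])) * (2 * (1 - x ^+ 2) * S - ((a + 2 * b) * x + a)) = 0.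
  by rewrite -ode -/S; ring.
have nz : ((x - 1) / 2 * ((x + 1) / 2)) ^+ 2 * (c * Q.[x]) != 0.
  by apply: mulf_neq0; [exact: expf_neq0 | exact: mulf_neq0].
by move/eqP: H; rewrite mulf_eq0 (negbTE nz) /= subr_eq0 => /eqP.
Qed.


Fixpoint hp (R : realType) (m : nat) (y : R) : {poly R} :=
  match m with
  | 0 => 0
  | m'.+1 => y *: hp R m' y + m'%:R *: 'X^(m'.-1)
  end.
Arguments hp {R}.
Arguments hp : simpl never.

Lemma hpS (R : realType) m (y : R) : hp m.+1 y = y *: hp m y + m%:R *: 'X^(m.-1).
Proof. by []. Qed.

Lemma hpE (R : realType) m (x y : R) : (hp m.+1 y).[x] = y * (hp m y).[x] + m%:R * x ^+ m.-1.
Proof. by rewrite hpS hornerD !hornerZ hornerXn. Qed.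

Lemma size_hp (R : realType) m (y : R) : (size (hp m y) <= m.-1)%N.
Proof.
elim: m => [|m IH]; first by rewrite /= size_poly0.
rewrite hpS; apply: (leq_trans (size_polyD _ _)); rewrite geq_max; apply/andP; split.
  by apply: (leq_trans (size_scale_leq _ _)); apply: (leq_trans IH); rewrite /=; lia.
case: m {IH} => [|m]; first by rewrite scale0r size_poly0.
by apply: (leq_trans (size_scale_leq _ _)); rewrite size_polyXn.
Qed.

Lemma hp_key (R : realType) m (x y : R) :
  y ^+ m - x ^+ m - m%:R * x ^+ m.-1 * (y - x) = (hp m y).[x] * (y - x) ^+ 2.
Proof.
elim: m => [|m IH]; first by rewrite /= horner0 !expr0 mul0r mul0r; ring.
rewrite hpS hornerD !hornerZ hornerXn.
case: m IH => [|m] IH.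
  by rewrite /= horner0; ring.
rewrite /= in IH *.
set H := (_ *: _ + _).[x]. rewrite [X in _ = X](_ : _ = y * (H * (y - x)^+2) + m.+1%:R * x ^+ m * (y - x)^+2); last by ring. rewrite -IH !exprS; ring.
Qed.

Lemma hp_diag (R : realType) m (x : R) :
  2 * (hp m x).[x] = m%:R * (m%:R - 1) * x ^+ m.-2.
Proof.
elim: m => [|m IH]; first by rewrite /= horner0 mulr0 mul0r mul0r.
rewrite hpS hornerD !hornerZ hornerXn.
case: m IH => [|m] IH.
  by rewrite /= horner0; ring.
case: m IH => [|m] IH.
  by rewrite /= !(hornerD, hornerZ, horner0, hornerXn, hornerC); ring.
rewrite /= in IH *.
rewrite mulrDr mulrCA IH !exprS; ring.
Qed.

Lemma perj (R : realType) n (x y : R) : x != y ->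
  4 * (1 - x ^+ 2) / (x - y) ^+ 2 * x ^+ n.+1 + (- 4 * (1 - y ^+ 2) / (x - y) ^+ 2 * y ^+ n.+1)
  = 4 * (n.+1%:R * x ^+ n - n.+3%:R * x ^+ n.+2) / (x - y) - 4 * (hp n.+1 y).[x]
    + 4 * (y * (hp n.+2 y).[x]) + 4 * n.+2%:R * x ^+ n.+1.
Proof.
move=> hxy.
have hyx : y - x != 0 by rewrite subr_eq0 eq_sym.
have hxy' : x - y != 0 by rewrite subr_eq0.
have e1 : (hp n.+1 y).[x] = (y ^+ n.+1 - x ^+ n.+1 - n.+1%:R * x ^+ n * (y - x)) / (y - x) ^+ 2.
  by rewrite (hp_key _ n.+1) mulfK // expf_neq0.
have e2 : y * (hp n.+2 y).[x] = (y ^+ n.+3 - x ^+ n.+3 - n.+3%:R * x ^+ n.+2 * (y - x)) / (y - x) ^+ 2 - n.+2%:R * x ^+ n.+1.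
  by rewrite (hp_key _ n.+3) mulfK ?expf_neq0 // [(hp n.+3 y).[x]]hpE addrK.
rewrite e1 e2 !exprS.
move: (x ^+ n) (y ^+ n) => X Y.
by field; rewrite hxy' hyx.
Qed.

Definition pp (R : realType) N (a : R) (z : 'I_N -> R) (n : nat) : {poly R} :=
  (2 * n%:R * a) *: 'X^(n.-1) + (2 * n%:R * (n%:R - 1)) *: 'X^(n.-2)
  - 4 *: (\sum_(j < N) hp n (z j)) + 4 *: (\sum_(j < N) z j *: hp n.+1 (z j)).
Arguments pp {R N}.

Lemma size_pp (R : realType) N (a : R) (z : 'I_N -> R) n : (size (pp a z n.+1) <= n.+1)%N.
Proof.
rewrite /pp.
apply: (leq_trans (size_polyD _ _)); rewrite geq_max; apply/andP; split; last first.
  apply: (leq_trans (size_scale_leq _ _)); apply: (leq_trans (size_sum _ _ _)).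
  apply/bigmax_leqP => j _; apply: (leq_trans (size_scale_leq _ _)); exact: size_hp.
apply: (leq_trans (size_polyD _ _)); rewrite geq_max; apply/andP; split; last first.
  rewrite size_polyN; apply: (leq_trans (size_scale_leq _ _)); apply: (leq_trans (size_sum _ _ _)).
  apply/bigmax_leqP => j _; apply: (leq_trans (size_hp _ _ _)); rewrite /=; lia.
apply: (leq_trans (size_polyD _ _)); rewrite geq_max; apply/andP; split.
  by apply: (leq_trans (size_scale_leq _ _)); rewrite size_polyXn.
by apply: (leq_trans (size_scale_leq _ _)); rewrite size_polyXn /=; lia.
Qed.

Lemma cnt (R : realType) N (i : 'I_N) : \sum_(j < N | j != i) (1 : R) = N%:R - 1.
Proof.
have h : \sum_(j < N) (1 : R) = N%:R by rewrite sumr_const card_ord.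
by rewrite (bigD1 i) //= in h; rewrite -h addrAC subrr add0r.
Qed.

Lemma row_id (R : realType) N (a b : R) (z : 'I_N -> R) (i : 'I_N) n :
  injective z -> -1 < z i < 1 ->
  2 * (1 - z i ^+ 2) * (\sum_(l < N | l != i) (z i - z l)^-1) = (a + 2 * b) * z i + a ->
  (4 * (\sum_(l < N | l != i) (1 - z i ^+ 2) / (z i - z l) ^+ 2)
      + 2 * (a + b) * ((1 + z i) / (1 - z i))
      + 2 * b * ((1 - z i) / (1 + z i))) * z i ^+ n.+1
  + \sum_(j < N | j != i) (- 4 * (1 - z j ^+ 2) / (z i - z j) ^+ 2 * z j ^+ n.+1)
  = 2 * n.+2%:R * (2 * N%:R + (a + b - 1) + (b - 1) + 1 - n.+2%:R) * z i ^+ n.+1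
    + (pp a z n.+1).[z i].
Proof.
move=> zinj hx hS.
set x := z i.
set S := \sum_(l < N | l != i) (x - z l)^-1.
rewrite -/x -/S in hS.
have hne : forall j, j != i -> x != z j.
  by move=> j hj; apply/eqP => /zinj hj'; rewrite hj' eqxx in hj.
set D1 := 4 * (\sum_(l < N | l != i) _).
set SB := \sum_(j < N | j != i) _.
set D23 := 2 * (a + b) * ((1 + x) / (1 - x)) + 2 * b * ((1 - x) / (1 + x)).
have -> : (D1 + 2 * (a + b) * ((1 + x) / (1 - x)) + 2 * b * ((1 - x) / (1 + x))) * x ^+ n.+1 + SB
   = (D1 * x ^+ n.+1 + SB) + D23 * x ^+ n.+1 by rewrite /D23; ring.
have -> : D1 * x ^+ n.+1 + SB = \sum_(j < N | j != i) (4 * (n.+1%:R * x ^+ n - n.+3%:R * x ^+ n.+2) / (x - z j)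
    - 4 * (hp n.+1 (z j)).[x] + 4 * (z j * (hp n.+2 (z j)).[x]) + 4 * n.+2%:R * x ^+ n.+1).
  rewrite /D1 /SB mulr_sumr mulr_suml -big_split /=; apply: eq_bigr => j hj.
  by rewrite -perj ?hne //; rewrite !mulrA.
set g := n.+1%:R * x ^+ n - n.+3%:R * x ^+ n.+2.
set A := \sum_(j < N | j != i) (hp n.+1 (z j)).[x].
set B := \sum_(j < N | j != i) z j * (hp n.+2 (z j)).[x].
have -> : \sum_(j < N | j != i) (4 * g / (x - z j) - 4 * (hp n.+1 (z j)).[x] + 4 * (z j * (hp n.+2 (z j)).[x]) + 4 * n.+2%:R * x ^+ n.+1)
   = 4 * g * S - 4 * A + 4 * B + 4 * n.+2%:R * x ^+ n.+1 * (N%:R - 1).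
  rewrite -(cnt _ _ i) /S /A /B !mulr_sumr -sumrN -!big_split /=; apply: eq_bigr => j _; rewrite mulr1; ring.
rewrite /pp !hornerD hornerN !hornerZ !horner_sum !hornerXn.
have eB : \sum_(j < N) (z j *: hp n.+2 (z j)).[x] = x * (hp n.+2 x).[x] + B.
  rewrite (bigD1 i) //=; congr (_ + _); first by rewrite hornerZ.
  by apply: eq_bigr => j _; rewrite hornerZ.
have eA : \sum_(j < N) (hp n.+1 (z j)).[x] = (hp n.+1 x).[x] + A by rewrite (bigD1 i).
rewrite eA eB.
have d1 : (hp n.+1 x).[x] = n.+1%:R * (n.+1%:R - 1) * x ^+ n.-1 / 2.
  by rewrite -(hp_diag _ n.+1 x); field.
have d2 : (hp n.+2 x).[x] = n.+2%:R * (n.+2%:R - 1) * x ^+ n / 2.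
  by rewrite -(hp_diag _ n.+2 x); field.
case/andP: hx => h1 h2; rewrite -/x in h1 h2.
have h4 : 1 - x != 0 by apply/eqP => h; lra.
have h5 : 1 + x != 0 by apply/eqP => h; lra.
have eS : S = ((a + 2 * b) * x + a) / (2 * (1 - x ^+ 2)).
  have h3 : 2 * (1 - x ^+ 2) != 0.
    by rewrite (_ : 1 - x ^+ 2 = (1 - x) * (1 + x)); [rewrite !mulf_neq0 ?pnatr_eq0 | ring].
  by rewrite -hS mulrC mulKf.
rewrite d1 d2 eS /D23.
rewrite /g !exprS.
move: (x ^+ n) (x ^+ n.-1) => X0 Xm.
rewrite -!nat1r.
field; rewrite h4 h5 /= (_ : 1 - x * x = (1 - x) * (1 + x)); [by rewrite mulf_neq0 | ring].
Qed.

Theorem lemma3p4 (R : realType) (N : nat) (a b : R) (z : 'I_N -> R) :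
  0 <= a -> 0 < b ->
  {homo z : i j / (i < j)%N >-> i < j} ->
  (forall i, root (jacobi N (a + b - 1) (b - 1)) (z i)) ->
  forall k : nat, (2 <= k <= N)%N ->
  exists p : {poly R}, (size p <= k.-1)%N /\
    Stilde a b z *m (\col_i (z i ^+ k.-1 * Num.sqrt (1 - z i ^+ 2)))
    = \col_i ((2 * k%:R * (2 * N%:R + (a + b - 1) + (b - 1) + 1 - k%:R)
                 * z i ^+ k.-1 + p.[z i]) * Num.sqrt (1 - z i ^+ 2)).
Proof.
move=> ha hb hz hroot k /andP [hk2 hkN].
have zinj : injective z.
  move=> j l hjl; apply/eqP; case: (ltngtP j l) => [h1|h1|/val_inj -> //];
    by have := hz _ _ h1; rewrite hjl ltxx.
have hin : forall j, -1 < z j < 1 := fun j => jac_root_in _ _ _ _ _ ha hb (hroot j).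
case: k hk2 hkN => [|[|n]] // _ hnN.
exists (pp a z n.+1); split; first exact: size_pp.
apply/matrixP => i j0; rewrite (ord1 j0) /Stilde !mxE.
under eq_bigr do rewrite !mxE.
rewrite (bigD1 i) //= eqxx.
have hS := stieltjes _ _ _ _ _ ha hb hz hroot i.
have hw : forall j, 0 <= 1 - z j ^+ 2.
  move=> j; case/andP: (hin j) => h1 h2; rewrite subr_ge0 expr2; nra.
set w := fun j => Num.sqrt (1 - z j ^+ 2).
rewrite [X in _ + X](eq_bigr (fun j => w i * (- 4 * (1 - z j ^+ 2) / (z i - z j) ^+ 2 * z j ^+ n.+1))); last first.
  move=> j hj; rewrite eq_sym (negbTE hj) sqrtrM // -/(w j) -/(w i).
  rewrite -(sqr_sqrtr (hw j)) -/(w j); ring.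
rewrite -[X in _ + X]mulr_sumr -/(w i).
rewrite -(row_id _ _ _ _ _ _ n zinj (hin i) hS) /w; ring.
Qed.
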